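(* Consider the three-door Monty Hall game described in the context. For every pure strategy $A$ of Conie there exists a door $u\in\{1,2,3\}$ (depending on $A$) such that $A$ loses against every pure strategy $(\theta,d)$ of Monte with $\theta=u$ (that is, whatever door $d$ Monte offers in case of a match). Consequently the always-switching strategy $u\,\mathrm{s}\,\mathrm{s}$ weakly dominates $A$: for every pure strategy $S$ of Monte, if $A$ wins against $S$ then $u\,\mathrm{s}\,\mathrm{s}$ wins against $S$.
   Context: Doors are numbered $1,2,3$. A pure strategy of Monte is a pair $(\theta,d)$ with $\theta\in\{1,2,3\}$ (the door hiding the prize) and $d\in\{1,2,3\}\setminus\{\theta\}$; there are six of them: $12,13,21,23,31,32$. A pure strategy of Conie is a triple $x\,a\,b$ with $x\in\{1,2,3\}$ (her initial choice) and $a,b\in\{\mathrm{h},\mathrm{s}\}$ (hold or switch); there are twelve of them. A play under the profile $((\theta,d),x\,a\,b)$ proceeds as follows: Monte offers door $y$, where $y=\theta$ if $x\neq\theta$ and $y=d$ if $x=\theta$ (a match). Conie's action is $a$ if $y$ is the smaller of the two doors in $\{1,2,3\}\setminus\{x\}$ and $b$ if it is the larger. Her final choice is $z=x$ if the action is $\mathrm{h}$ and $z=y$ if it is $\mathrm{s}$. Conie wins (payoff $1$) iff $z=\theta$, otherwise she gets payoff $0$. Strategies $x\,\mathrm{s}\,\mathrm{s}$ are called always-switching. *)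

(* Defs.v *)
From Stdlib Require Import Arith Bool.

Inductive door := d1 | d2 | d3.

Definition door_num (x : door) : nat :=
  match x with d1 => 1 | d2 => 2 | d3 => 3 end.

Definition door_eqb (x y : door) : bool := Nat.eqb (door_num x) (door_num y).

(* Actions: hold or switch *)
Inductive action := h | s.

Record monte_strategy := MonteS {
  theta : door;
  offer : door;
  offer_ne : theta <> offer }.

(* Pure strategy of Conie: x a b *)
Record conie_strategy := ConieS {
  init : door;
  act_small : action;
  act_large : action }.

Definition smaller_other (x : door) : door :=
  match x with d1 => d2 | d2 => d1 | d3 => d1 end.

Definition offered (m : monte_strategy) (c : conie_strategy) : door :=
  if door_eqb (init c) (theta m) then offer m else theta m.

Definition conie_action (m : monte_strategy) (c : conie_strategy) : action :=
  if door_eqb (offered m c) (smaller_other (init c)) then act_small c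
  else act_large c.

Definition final_choice (m : monte_strategy) (c : conie_strategy) : door :=
  match conie_action m c with h => init c | s => offered m c end.

Definition wins (c : conie_strategy) (m : monte_strategy) : Prop :=
  final_choice m c = theta m.

Definition always_switch (u : door) : conie_strategy := ConieS u s s.

(* Main.v *)
Require Import Defs.

Ltac solve_u :=
  split; intros [t o Hne]; simpl in *;
  [ intros Ht; subst; destruct o; try congruence; unfold wins; cbv; congruence
  | unfold wins; destruct t, o; try congruence; cbv; congruence ].

Theorem mainTheorem1 :
  forall A : conie_strategy,
    exists u : door,
      (forall S : monte_strategy, theta S = u -> ~ wins A S) /\
      (forall S : monte_strategy, wins A S -> wins (always_switch u) S).
Proof.
  intros [x a b].
  destruct x, a, b;
  first [ exists d1; solve_u | exists d2; solve_u | exists d3; solve_u ].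
Qed.
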